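(* Let $\sigma:\mathbb{R}\to\mathbb{R}$ be bounded and differentiable with bounded derivative. Let $d,r,L,K_n,n\in\mathbb{N}$ with $r\ge 2d$, $c_2>0$, data $(X_1,Y_1),\dots,(X_n,Y_n)\in\mathbb{R}^d\times\mathbb{R}$, and let $\alpha_n\ge 1$, $L_n>0$, $t_n\ge L_n$, $\gamma_n^*\ge 1$, $B_n\ge 1$. Let $\mathbf{w},\mathbf{v}$ be weight vectors such that $|w^{(L)}_{1,1,k}|\le\gamma_n^*$ for $k=1,\dots,K_n$, $|w^{(l)}_{k,i,j}|\le B_n$ for all $k,i,j$ and $l=1,\dots,L-1$, and \[ \|\mathbf{w}-\mathbf{v}\|_\infty^2\le \frac{2t_n}{L_n}\cdot\max\{F_n(\mathbf{v}),1\}. \] Then \[ \|(\nabla_{\mathbf{w}}F_n)(\mathbf{w})\|\le c_5\cdot K_n^{3/2}\cdot B_n^{2L}\cdot(\gamma_n^* )^2\cdot\alpha_n^2\cdot\sqrt{\frac{t_n}{L_n}\cdot\max\{F_n(\mathbf{v}),1\}}, \] where $c_5>0$ is a constant depending only on $\sigma,d,r,L,c_2$.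
   Context: For a weight vector $\mathbf{w}=(w^{(l)}_{k,i,j})$ define $f_{\mathbf{w}}(x)=\sum_{j=1}^{K_n} w^{(L)}_{1,1,j}f^{(L)}_{j,1}(x)$ ($x\in\mathbb{R}^d$), where for $k\in\{1,\dots,K_n\}$, $i\in\{1,\dots,r\}$: $f^{(l)}_{k,i}(x)=\sigma\big(\sum_{j=1}^r w^{(l-1)}_{k,i,j}f^{(l-1)}_{k,j}(x)+w^{(l-1)}_{k,i,0}\big)$ for $l=2,\dots,L$ and $f^{(1)}_{k,i}(x)=\sigma\big(\sum_{j=1}^d w^{(0)}_{k,i,j}x^{(j)}+w^{(0)}_{k,i,0}\big)$. The weight vector consists of all these weights (outer weights $w^{(L)}_{1,1,j}$, $j=1,\dots,K_n$; $w^{(l)}_{k,i,j}$, $1\le l\le L-1$, $j\in\{0,\dots,r\}$; $w^{(0)}_{k,i,j}$, $j\in\{0,\dots,d\}$). Define $F_n(\mathbf{w})=\frac1n\sum_{i=1}^n|f_{\mathbf{w}}(X_i)-Y_i|^2\,1_{[-\alpha_n,\alpha_n]^d}(X_i)+c_2\sum_{j=1}^{K_n}|w^{(L)}_{1,1,j}|^2$. $\|\cdot\|$ is the Euclidean norm and $\|\cdot\|_\infty$ the maximum norm of a weight vector. *)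

(* Defs.v *)
From Stdlib Require Import Reals Lra Lia List Arith.
From Coquelicot Require Import Coquelicot.
Import ListNotations.
Open Scope R_scope.

Fixpoint rsum1 (f : nat -> R) (n : nat) : R :=
  match n with O => 0 | S m => rsum1 f m + f (S m) end.

(* A weight vector: w l k i j stands for w^{(l)}_{k,i,j}.
   Only the coordinates listed in [coords] are genuine weights. *)
Definition Weights := nat -> nat -> nat -> nat -> R.

(* Points of R^d: x j = x^{(j)}, j = 1..d. *)
Definition Pt := nat -> R.

(* hid m k i x = f^{(m+1)}_{k,i}(x) *)
Fixpoint hid (sigma : R -> R) (d r : nat) (w : Weights) (m k i : nat) (x : Pt) : R :=
  match m with
  | O => sigma (rsum1 (fun j => w 0%nat k i j * x j) d + w 0%nat k i 0%nat)
  | S m' => sigma (rsum1 (fun j => w (S m') k i j * hid sigma d r w m' k j x) r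
                   + w (S m') k i 0%nat)
  end.

Definition fnet (sigma : R -> R) (d r L K : nat) (w : Weights) (x : Pt) : R :=
  rsum1 (fun j => w L 1%nat 1%nat j * hid sigma d r w (L - 1) j 1%nat x) K.

Fixpoint box_ind (alpha : R) (x : Pt) (d : nat) : R :=
  match d with
  | O => 1
  | S d' => (if Rle_dec (Rabs (x (S d'))) alpha then 1 else 0) * box_ind alpha x d'
  end.

Definition Fobj (sigma : R -> R) (d r L K n : nat) (c2 alpha : R)
  (X : nat -> Pt) (Y : nat -> R) (w : Weights) : R :=
  / INR n * rsum1 (fun i => (fnet sigma d r L K w (X i) - Y i) ^ 2
                              * box_ind alpha (X i) d) n
  + c2 * rsum1 (fun j => (w L 1%nat 1%nat j) ^ 2) K.

Definition coord := (nat * nat * nat * nat)%type.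

Definition coords (d r L K : nat) : list coord :=
  map (fun j => (L, 1%nat, 1%nat, j)) (seq 1 K)
  ++ flat_map (fun l => flat_map (fun k => flat_map (fun i =>
        map (fun j => (l, k, i, j)) (seq 0 (S r))) (seq 1 r)) (seq 1 K)) (seq 1 (L - 1))
  ++ flat_map (fun k => flat_map (fun i =>
        map (fun j => (0%nat, k, i, j)) (seq 0 (S d))) (seq 1 r)) (seq 1 K).

Definition at_c (w : Weights) (c : coord) : R :=
  let '(l, k, i, j) := c in w l k i j.

Definition upd (w : Weights) (c : coord) (t : R) : Weights :=
  let '(l0, k0, i0, j0) := c in
  fun l k i j => if (Nat.eqb l l0 && Nat.eqb k k0 && Nat.eqb i i0 && Nat.eqb j j0)%bool
                 then t else w l k i j.

Definition maxnorm (d r L K : nat) (w : Weights) : R :=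
  fold_right Rmax 0 (map (fun c => Rabs (at_c w c)) (coords d r L K)).

Definition partial (F : Weights -> R) (w : Weights) (c : coord) : R :=
  Derive (fun t => F (upd w c t)) (at_c w c).

Definition gradnorm (d r L K : nat) (F : Weights -> R) (w : Weights) : R :=
  sqrt (fold_right Rplus 0 (map (fun c => (partial F w c) ^ 2) (coords d r L K))).

Definition wsub (w v : Weights) : Weights := fun l k i j => w l k i j - v l k i j.

(* Main.v *)
Require Import Defs.
From Stdlib Require Import Reals Lra Lia List Arith FunctionalExtensionality.
From Coquelicot Require Import Coquelicot.
Open Scope R_scope.

Lemma rsum1_le f g n : (forall j, (1 <= j <= n)%nat -> f j <= g j) -> rsum1 f n <= rsum1 g n.
Proof. induction n; simpl; intros H. lra.
  assert (H1 := H (S n) ltac:(lia)). assert (rsum1 f n <= rsum1 g n) by (apply IHn; intros; apply H; lia). lra. Qed.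

Lemma rsum1_abs f n : Rabs (rsum1 f n) <= rsum1 (fun j => Rabs (f j)) n.
Proof. induction n; simpl. rewrite Rabs_R0; lra.
  eapply Rle_trans. apply Rabs_triang. lra. Qed.

Lemma rsum1_const c n : rsum1 (fun _ => c) n = INR n * c.
Proof. induction n; simpl rsum1. simpl; lra. rewrite IHn, S_INR. lra. Qed.

Lemma rsum1_minus f g n : rsum1 f n - rsum1 g n = rsum1 (fun j => f j - g j) n.
Proof. induction n; simpl. lra. rewrite <- IHn. lra. Qed.

Lemma rsum1_plus f g n : rsum1 f n + rsum1 g n = rsum1 (fun j => f j + g j) n.
Proof. induction n; simpl. lra. rewrite <- IHn. lra. Qed.

Lemma rsum1_scal c f n : rsum1 (fun j => c * f j) n = c * rsum1 f n.
Proof. induction n; simpl. lra. rewrite IHn. lra. Qed.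

Lemma rsum1_delta a k0 K : 0 <= a ->
  rsum1 (fun k => if Nat.eqb k k0 then a else 0) K <= a /\
  ((K < k0)%nat -> rsum1 (fun k => if Nat.eqb k k0 then a else 0) K = 0).
Proof. intros Ha. induction K; cbn [rsum1]. split; [lra|auto].
  destruct IHK as [H1 H2]. destruct (Nat.eqb_spec (S K) k0).
  - subst k0. rewrite H2 by lia. split. lra. intros; lia.
  - split. lra. intros. rewrite H2 by lia. lra. Qed.

Lemma sigma_lip sigma M' : (forall x, ex_derive sigma x) ->
  (forall x, Rabs (Derive sigma x) <= M') ->
  forall a b, Rabs (sigma a - sigma b) <= M' * Rabs (a - b).
Proof. intros Hd HM a b.
  destruct (MVT_cor4 sigma (Derive sigma) b (Rabs (a - b))) with (b := a) as [c [Hc _]].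
  { intros c _. apply Derive_correct, Hd. } lra.
  rewrite Hc, Rabs_mult. apply Rmult_le_compat_r. apply Rabs_pos. apply HM. Qed.

Fixpoint Cm (M M' : R) (d r : nat) (m : nat) : R :=
  match m with O => M' * (INR d + 1) | S m => M' * (INR r * M + 1 + INR r * Cm M M' d r m) end.

Lemma Cm_nonneg M M' d r m : 0 <= M -> 0 <= M' -> 0 <= Cm M M' d r m.
Proof. intros. induction m; simpl.
  - apply Rmult_le_pos; auto. pose proof (pos_INR d); lra.
  - apply Rmult_le_pos; auto. pose proof (pos_INR r).
    assert (0 <= INR r * M) by (apply Rmult_le_pos; lra).
    assert (0 <= INR r * Cm M M' d r m) by (apply Rmult_le_pos; lra). lra. Qed.

Lemma hid_bound sigma M d r w m k i x : (forall z, Rabs (sigma z) <= M) ->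
  Rabs (hid sigma d r w m k i x) <= M.
Proof. intros H; destruct m; simpl; apply H. Qed.

Lemma hid_diff sigma M M' d r w w' k x alpha B e :
  (forall z, Rabs (sigma z) <= M) ->
  (forall a b, Rabs (sigma a - sigma b) <= M' * Rabs (a - b)) ->
  0 <= M -> 0 <= M' -> 1 <= alpha -> 1 <= B -> 0 <= e ->
  (forall j, (1 <= j <= d)%nat -> Rabs (x j) <= alpha) ->
  (forall l i j, Rabs (w l k i j - w' l k i j) <= e) ->
  forall m, (forall l i j, (1 <= l <= m)%nat -> (1 <= i <= r)%nat -> (1 <= j <= r)%nat ->
               Rabs (w l k i j) <= B) ->
  forall i, (1 <= i <= Nat.max r 1)%nat ->
  Rabs (hid sigma d r w m k i x - hid sigma d r w' m k i x) <= Cm M M' d r m * B ^ m * alpha * e.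
Proof.
  intros Hs Hl HM HM' Ha HB He Hx Hw. induction m as [|m IH]; intros HBw i Hi.
  - simpl. eapply Rle_trans. apply Hl. rewrite Rmult_assoc, Rmult_assoc, Rmult_assoc.
    apply Rmult_le_compat_l. lra.
    replace (rsum1 (fun j => w 0%nat k i j * x j) d + w 0%nat k i 0%nat -
      (rsum1 (fun j => w' 0%nat k i j * x j) d + w' 0%nat k i 0%nat)) with
      (rsum1 (fun j => (w 0%nat k i j - w' 0%nat k i j) * x j) d + (w 0%nat k i 0%nat - w' 0%nat k i 0%nat)).
    2:{ 
        assert (rsum1 (fun j => (w 0%nat k i j - w' 0%nat k i j) * x j) d =
                rsum1 (fun j => w 0%nat k i j * x j - w' 0%nat k i j * x j) d).
        { clear. induction d; simpl; auto. rewrite IHd. ring. }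
        rewrite H, <- rsum1_minus. ring. }
    eapply Rle_trans. apply Rabs_triang.
    assert (Rabs (rsum1 (fun j => (w 0%nat k i j - w' 0%nat k i j) * x j) d) <= INR d * (e * alpha)).
    { eapply Rle_trans. apply rsum1_abs. rewrite <- rsum1_const. apply rsum1_le.
      intros j Hj. rewrite Rabs_mult. apply Rmult_le_compat; try apply Rabs_pos; auto. }
    pose proof (Hw 0%nat i 0%nat). pose proof (pos_INR d).
    assert (INR d * (e*alpha) <= INR d * alpha * e) by lra.
    assert (e <= alpha * e) by nra. nra.
  - simpl. eapply Rle_trans. apply Hl.
    set (Cp := Cm M M' d r m). simpl in IH. fold Cp in IH.
    assert (HC : 0 <= Cp) by (apply Cm_nonneg; auto).
    assert (HBm : 1 <= B ^ m) by (apply pow_R1_Rle; lra).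
    replace (M' * (INR r * M + 1 + INR r * Cp) * (B * B ^ m) * alpha * e) with
      (M' * ((INR r * M + 1 + INR r * Cp) * (B * B ^ m) * alpha * e)) by ring.
    apply Rmult_le_compat_l. lra.
    set (s := rsum1 _ r + _). set (s' := rsum1 _ r + _).
    assert (Hss : s - s' = rsum1 (fun j => w (S m) k i j * hid sigma d r w m k j x
                   - w' (S m) k i j * hid sigma d r w' m k j x) r + (w (S m) k i 0%nat - w' (S m) k i 0%nat)).
    { unfold s, s'. rewrite <- rsum1_minus. ring. }
    rewrite Hss. eapply Rle_trans. apply Rabs_triang.
    assert (Hsum : Rabs (rsum1 (fun j => w (S m) k i j * hid sigma d r w m k j x
                   - w' (S m) k i j * hid sigma d r w' m k j x) r) <=
                   INR r * (B * (Cp * B ^ m * alpha * e) + e * M)).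
    { eapply Rle_trans. apply rsum1_abs. rewrite <- rsum1_const. apply rsum1_le.
      intros j Hj.
      replace (w (S m) k i j * hid sigma d r w m k j x - w' (S m) k i j * hid sigma d r w' m k j x)
        with (w (S m) k i j * (hid sigma d r w m k j x - hid sigma d r w' m k j x)
              + (w (S m) k i j - w' (S m) k i j) * hid sigma d r w' m k j x) by ring.
      eapply Rle_trans. apply Rabs_triang. rewrite !Rabs_mult.
      apply Rplus_le_compat; apply Rmult_le_compat; try apply Rabs_pos.
      + apply HBw; lia.
      + apply IH. intros; apply HBw; lia. lia.
      + apply Hw.
      + apply hid_bound; auto. }
    pose proof (Hw (S m) i 0%nat). pose proof (pos_INR r).
    assert (H1 : 1 <= B * B ^ m * alpha).
    { assert (1 <= B * B ^ m) by nra. nra. }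
    set (T := B * B ^ m * alpha) in *.
    assert (INR r * (B * (Cp * B ^ m * alpha * e) + e * M) = INR r * Cp * T * e + INR r * M * e)
      by (unfold T; ring). rewrite H2 in Hsum.
    assert (INR r * M * e <= INR r * M * T * e).
    { assert (0 <= INR r * M * e) by (apply Rmult_le_pos; [apply Rmult_le_pos|]; lra). nra. }
    assert (e <= T * e) by nra.
    replace ((INR r * M + 1 + INR r * Cp) * (B * B ^ m) * alpha * e) with
       (INR r * Cp * T * e + INR r * M * T * e + T * e) by (unfold T; ring). lra.
Qed.

Lemma fnet_diff sigma M M' d r L K w w' x alpha B G e1 e2 :
  (forall z, Rabs (sigma z) <= M) ->
  (forall a b, Rabs (sigma a - sigma b) <= M' * Rabs (a - b)) ->
  0 <= M -> 0 <= M' -> 1 <= alpha -> 1 <= B ->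
  (forall j, (1 <= j <= d)%nat -> Rabs (x j) <= alpha) ->
  (forall k, 0 <= e1 k) ->
  (forall k l i j, Rabs (w l k i j - w' l k i j) <= e1 k) ->
  (forall k, Rabs (w L 1%nat 1%nat k - w' L 1%nat 1%nat k) <= e2 k) ->
  (forall l k i j, (1 <= l <= L - 1)%nat -> (1 <= k <= K)%nat ->
        (1 <= i <= r)%nat -> (j <= r)%nat -> Rabs (w l k i j) <= B) ->
  (forall k, (1 <= k <= K)%nat -> Rabs (w L 1%nat 1%nat k) <= G) ->
  Rabs (fnet sigma d r L K w x - fnet sigma d r L K w' x) <=
  rsum1 (fun k => G * (Cm M M' d r (L - 1) * B ^ (L - 1) * alpha * e1 k) + e2 k * M) K.
Proof.
  intros Hs Hl HM HM' Ha HB Hx He1 Hw1 Hw2 HBw HG. unfold fnet. rewrite rsum1_minus.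
  eapply Rle_trans. apply rsum1_abs. apply rsum1_le. intros k Hk.
  set (h := hid sigma d r w (L - 1) k 1%nat x). set (h' := hid sigma d r w' (L - 1) k 1%nat x).
  replace (w L 1%nat 1%nat k * h - w' L 1%nat 1%nat k * h') with
     (w L 1%nat 1%nat k * (h - h') + (w L 1%nat 1%nat k - w' L 1%nat 1%nat k) * h') by ring.
  eapply Rle_trans. apply Rabs_triang. rewrite !Rabs_mult.
  apply Rplus_le_compat; apply Rmult_le_compat; try apply Rabs_pos; auto.
  - apply (hid_diff sigma M M' d r w w' k x alpha B (e1 k)); auto.
    intros; apply HBw; lia. lia.
  - apply hid_bound; auto.
Qed.

Lemma upd_diff (w : Weights) l0 k0 i0 j0 h l k i j :
  Rabs (w l k i j - upd w (l0, k0, i0, j0) (at_c w (l0, k0, i0, j0) + h) l k i j)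
  <= (if Nat.eqb k k0 then Rabs h else 0) /\
  Rabs (w l k i j - upd w (l0, k0, i0, j0) (at_c w (l0, k0, i0, j0) + h) l k i j)
  <= (if Nat.eqb j j0 then Rabs h else 0).
Proof.
  simpl. destruct (Nat.eqb_spec l l0); destruct (Nat.eqb_spec k k0);
  destruct (Nat.eqb_spec i i0); destruct (Nat.eqb_spec j j0); simpl; subst;
  try (rewrite Rminus_diag, Rabs_R0; split; try lra; apply Rabs_pos; fail);
  (replace (w l0 k0 i0 j0 - (w l0 k0 i0 j0 + h)) with (- h) by ring;
   rewrite Rabs_Ropp; lra).
Qed.

Lemma box_cases alpha x d :
  box_ind alpha x d = 0 \/
  (box_ind alpha x d = 1 /\ forall j, (1 <= j <= d)%nat -> Rabs (x j) <= alpha).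
Proof.
  induction d; simpl. right; split; auto; intros; lia.
  destruct (Rle_dec (Rabs (x (S d))) alpha).
  - destruct IHd as [H|[H1 H2]]. left; rewrite H; ring.
    right. split. rewrite H1; ring. intros j Hj.
    destruct (Nat.eq_dec j (S d)). subst; auto. apply H2; lia.
  - left; ring.
Qed.

Lemma box_nonneg alpha x d : 0 <= box_ind alpha x d <= 1.
Proof. destruct (box_cases alpha x d) as [H|[H _]]; rewrite H; lra. Qed.

Lemma F_lip sigma M M' d r L K n c2 alpha X Y w B G c h :
  (forall z, Rabs (sigma z) <= M) ->
  (forall a b, Rabs (sigma a - sigma b) <= M' * Rabs (a - b)) ->
  0 <= M -> 0 <= M' -> 1 <= alpha -> 1 <= B -> 0 <= G -> 0 <= c2 -> (1 <= n)%nat ->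
  (forall l k i j, (1 <= l <= L - 1)%nat -> (1 <= k <= K)%nat ->
        (1 <= i <= r)%nat -> (j <= r)%nat -> Rabs (w l k i j) <= B) ->
  (forall k, (1 <= k <= K)%nat -> Rabs (w L 1%nat 1%nat k) <= G) ->
  Rabs h <= 1 ->
  let D := G * Cm M M' d r (L - 1) * B ^ (L - 1) * alpha + M in
  let R := / INR n * rsum1 (fun i => Rabs (fnet sigma d r L K w (X i) - Y i)
                                       * box_ind alpha (X i) d) n in
  Rabs (Fobj sigma d r L K n c2 alpha X Y (upd w c (at_c w c + h))
        - Fobj sigma d r L K n c2 alpha X Y w)
  <= Rabs h * (D * (D + 2 * R) + c2 * (2 * G + 1)).
Proof.
  intros Hs Hl HM HM' Ha HB HG Hc2 Hn HBw HGw Hh D R.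
  destruct c as [[[l0 k0] i0] j0].
  set (w1 := upd w (l0, k0, i0, j0) (at_c w (l0, k0, i0, j0) + h)).
  assert (HCm : 0 <= Cm M M' d r (L - 1)) by (apply Cm_nonneg; auto).
  assert (HBp : 1 <= B ^ (L - 1)) by (apply pow_R1_Rle; lra).
  assert (HD : 0 <= D).
  { unfold D. assert (0 <= G * Cm M M' d r (L - 1)) by (apply Rmult_le_pos; auto).
    assert (0 <= G * Cm M M' d r (L - 1) * B ^ (L - 1)) by (apply Rmult_le_pos; lra).
    assert (0 <= G * Cm M M' d r (L - 1) * B ^ (L - 1) * alpha) by (apply Rmult_le_pos; lra).
    lra. }
  assert (Hfd : forall x, (forall j, (1 <= j <= d)%nat -> Rabs (x j) <= alpha) ->
     Rabs (fnet sigma d r L K w1 x - fnet sigma d r L K w x) <= D * Rabs h).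
  { intros x Hx. rewrite Rabs_minus_sym.
    eapply Rle_trans.
    apply (fnet_diff sigma M M' d r L K w w1 x alpha B G
       (fun k => if Nat.eqb k k0 then Rabs h else 0) (fun k => if Nat.eqb k j0 then Rabs h else 0));
      auto.
    - intros k; destruct (Nat.eqb k k0); [apply Rabs_pos|lra].
    - intros; apply upd_diff.
    - intros; apply upd_diff.
    - set (A := G * (Cm M M' d r (L - 1) * B ^ (L - 1) * alpha)).
      assert (E : rsum1 (fun k => G * (Cm M M' d r (L - 1) * B ^ (L - 1) * alpha *
                 (if Nat.eqb k k0 then Rabs h else 0)) + (if Nat.eqb k j0 then Rabs h else 0) * M) K
               = A * rsum1 (fun k => if Nat.eqb k k0 then Rabs h else 0) K
                 + M * rsum1 (fun k => if Nat.eqb k j0 then Rabs h else 0) K).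
      { rewrite <- !rsum1_scal, rsum1_plus. apply f_equal2; auto.
        apply functional_extensionality. intros k. unfold A. ring. }
      rewrite E.
      destruct (rsum1_delta (Rabs h) k0 K (Rabs_pos h)) as [E1 _].
      destruct (rsum1_delta (Rabs h) j0 K (Rabs_pos h)) as [E2 _].
      assert (0 <= A) by (unfold A; apply Rmult_le_pos; auto;
         apply Rmult_le_pos; [apply Rmult_le_pos|]; lra).
      assert (A * rsum1 (fun k => if Nat.eqb k k0 then Rabs h else 0) K <= A * Rabs h)
        by (apply Rmult_le_compat_l; auto).
      assert (M * rsum1 (fun k => if Nat.eqb k j0 then Rabs h else 0) K <= M * Rabs h)
        by (apply Rmult_le_compat_l; auto).
      unfold D. replace (G * Cm M M' d r (L - 1) * B ^ (L - 1) * alpha) with A by (unfold A; ring).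
      lra. }
  unfold Fobj.
  set (S1 := fun v => rsum1 (fun i => (fnet sigma d r L K v (X i) - Y i) ^ 2 * box_ind alpha (X i) d) n).
  set (S2 := fun v : Weights => rsum1 (fun j => v L 1%nat 1%nat j ^ 2) K).
  change (Rabs (/ INR n * S1 w1 + c2 * S2 w1 - (/ INR n * S1 w + c2 * S2 w))
    <= Rabs h * (D * (D + 2 * R) + c2 * (2 * G + 1))).
  assert (HnR : 0 < INR n) by (apply lt_0_INR; lia).
  assert (H1 : Rabs (S1 w1 - S1 w) <= Rabs h * D * (INR n * D + 2 * rsum1 (fun i => Rabs (fnet sigma d r L K w (X i) - Y i)
                                       * box_ind alpha (X i) d) n)).
  { unfold S1. rewrite rsum1_minus. eapply Rle_trans. apply rsum1_abs.
    rewrite <- rsum1_const, <- rsum1_scal, rsum1_plus, <- rsum1_scal.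
    apply rsum1_le. intros i _.
    destruct (box_cases alpha (X i) d) as [E|[E Hx]]; rewrite E.
    - rewrite !Rmult_0_r, Rminus_diag, Rabs_R0. rewrite Rplus_0_r.
      assert (0 <= D * D) by nra. pose proof (Rabs_pos h). nra.
    - specialize (Hfd (X i) Hx).
      set (a1 := fnet sigma d r L K w1 (X i)) in *. set (a0 := fnet sigma d r L K w (X i)) in *.
      replace ((a1 - Y i) ^ 2 * 1 - (a0 - Y i) ^ 2 * 1) with ((a1 - a0) * ((a1 - a0) + 2 * (a0 - Y i))) by ring.
      rewrite Rabs_mult. rewrite Rmult_1_r.
      assert (Rabs (a1 - a0 + 2 * (a0 - Y i)) <= D * Rabs h + 2 * Rabs (a0 - Y i)).
      { eapply Rle_trans. apply Rabs_triang. rewrite Rabs_mult, (Rabs_right 2) by lra. lra. }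
      assert (D * Rabs h <= D) by (pose proof (Rabs_pos h); nra).
      pose proof (Rabs_pos h). pose proof (Rabs_pos (a0 - Y i)).
      pose proof (Rabs_pos (a1 - a0)).
      apply Rle_trans with (D * Rabs h * (D + 2 * Rabs (a0 - Y i))).
      + apply Rmult_le_compat; auto. apply Rabs_pos. lra.
      + lra. }
  assert (H2 : Rabs (S2 w1 - S2 w) <= Rabs h * (2 * G + 1)).
  { unfold S2. rewrite rsum1_minus. eapply Rle_trans. apply rsum1_abs.
    apply Rle_trans with (rsum1 (fun k => (2 * G + 1) * (if Nat.eqb k j0 then Rabs h else 0)) K).
    - apply rsum1_le. intros k Hk.
      destruct (upd_diff w l0 k0 i0 j0 h L 1%nat 1%nat k) as [_ Hd].
      fold w1 in Hd. rewrite Rabs_minus_sym in Hd.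
      replace (w1 L 1%nat 1%nat k ^ 2 - w L 1%nat 1%nat k ^ 2) with
        ((w1 L 1%nat 1%nat k - w L 1%nat 1%nat k) * (w1 L 1%nat 1%nat k - w L 1%nat 1%nat k + 2 * w L 1%nat 1%nat k)) by ring.
      rewrite Rabs_mult. rewrite Rmult_comm.
      assert (Rabs (if Nat.eqb k j0 then Rabs h else 0) <= 1).
      { destruct (Nat.eqb k j0). rewrite Rabs_Rabsolu; auto. rewrite Rabs_R0; lra. }
      apply Rmult_le_compat; try apply Rabs_pos; auto.
      eapply Rle_trans. apply Rabs_triang. rewrite Rabs_mult, (Rabs_right 2) by lra.
      specialize (HGw k Hk).
      assert (Rabs (w1 L 1%nat 1%nat k - w L 1%nat 1%nat k) <= 1).
      { eapply Rle_trans. apply Hd. destruct (Nat.eqb k j0); lra. } lra.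
    - rewrite rsum1_scal. destruct (rsum1_delta (Rabs h) j0 K (Rabs_pos h)) as [E2 _].
      assert (0 <= 2 * G + 1) by lra. nra. }
  replace (/ INR n * S1 w1 + c2 * S2 w1 - (/ INR n * S1 w + c2 * S2 w)) with
    (/ INR n * (S1 w1 - S1 w) + c2 * (S2 w1 - S2 w)) by ring.
  eapply Rle_trans. apply Rabs_triang. rewrite !Rabs_mult.
  rewrite (Rabs_right (/ INR n)) by (apply Rle_ge, Rlt_le, Rinv_0_lt_compat; lra).
  rewrite (Rabs_right c2) by lra.
  assert (Hi : 0 < / INR n) by (apply Rinv_0_lt_compat; lra).
  apply Rle_trans with (/ INR n * (Rabs h * D * (INR n * D + 2 * rsum1 (fun i => Rabs (fnet sigma d r L K w (X i) - Y i)
                                       * box_ind alpha (X i) d) n)) + c2 * (Rabs h * (2 * G + 1))).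
  { apply Rplus_le_compat; apply Rmult_le_compat_l; lra. }
  right. unfold R. field. lra.
Qed.

Lemma Lim_seq_bound (u : nat -> R) (P : R) :
  (forall n, Rabs (u n) <= P) -> Rabs (real (Lim_seq u)) <= P.
Proof.
  intros H.
  assert (H1 : Rbar_le (LimSup_seq u) P).
  { rewrite <- (LimSup_seq_const P). apply LimSup_le. exists 0%nat. intros n _.
    specialize (H n). apply Rabs_le_between in H. lra. }
  assert (H2 : Rbar_le (-P) (LimInf_seq u)).
  { rewrite <- (LimInf_seq_const (-P)). apply LimInf_le. exists 0%nat. intros n _.
    specialize (H n). apply Rabs_le_between in H. lra. }
  pose proof (LimSup_LimInf_seq_le u) as H3.
  unfold Lim_seq.
  destruct (LimSup_seq u) as [a| |]; destruct (LimInf_seq u) as [b| |]; simpl in *;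
   try contradiction.
  apply Rabs_le_between. lra.
Qed.

Lemma upd_same (w : Weights) c : upd w c (at_c w c) = w.
Proof. destruct c as [[[l0 k0] i0] j0]. simpl.
  apply functional_extensionality; intro l; apply functional_extensionality; intro k;
  apply functional_extensionality; intro i; apply functional_extensionality; intro j.
  destruct (Nat.eqb_spec l l0); destruct (Nat.eqb_spec k k0);
  destruct (Nat.eqb_spec i i0); destruct (Nat.eqb_spec j j0); simpl; subst; auto. Qed.

Lemma partial_bound F w c P :
  (forall h, 0 < h <= 1 -> Rabs (F (upd w c (at_c w c + h)) - F w) <= h * P) ->
  Rabs (partial F w c) <= P.
Proof.
  intros H. unfold partial, Derive, Lim. apply Lim_seq_bound. intros m. simpl.
  rewrite upd_same. rewrite Rplus_0_l.
  assert (Hp : 0 < INR m + 1) by (pose proof (pos_INR m); lra).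
  set (h := / (INR m + 1)).
  assert (Hh : 0 < h <= 1).
  { unfold h. split. apply Rinv_0_lt_compat; lra.
    rewrite <- Rinv_1. apply Rinv_le_contravar. lra. pose proof (pos_INR m); lra. }
  specialize (H h Hh). unfold Rdiv. rewrite Rabs_mult, Rabs_inv, (Rabs_right h) by lra.
  apply (Rmult_le_reg_r h). lra. rewrite Rmult_assoc, Rinv_l by lra. lra.
Qed.

Lemma fold_max_ge (l : list R) x : In x l -> x <= fold_right Rmax 0 l.
Proof. induction l; simpl; intros H. contradiction.
  destruct H. subst. apply Rmax_l. eapply Rle_trans. apply IHl; auto. apply Rmax_r. Qed.

Lemma fold_max_nonneg (l : list R) : 0 <= fold_right Rmax 0 l.
Proof. induction l; simpl. lra. eapply Rle_trans. apply IHl. apply Rmax_r. Qed.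

Lemma maxnorm_ge d r L K w c : In c (coords d r L K) -> Rabs (at_c w c) <= maxnorm d r L K w.
Proof. intros H. unfold maxnorm. apply fold_max_ge. apply in_map_iff. exists c; auto. Qed.

Lemma outer_in d r L K k : (1 <= k <= K)%nat -> In (L, 1%nat, 1%nat, k) (coords d r L K).
Proof. intros Hk. unfold coords. apply in_or_app. left. apply in_map_iff. exists k.
  split; auto. apply in_seq. lia. Qed.

Lemma fold_sum_bound (l : list coord) (f : coord -> R) P :
  (forall c, In c l -> Rabs (f c) <= P) ->
  fold_right Rplus 0 (map (fun c => f c ^ 2) l) <= INR (length l) * P ^ 2.
Proof. induction l; cbn [length map fold_right]; intros H. simpl; lra.
  assert (H1 := H a (or_introl eq_refl)).
  assert (fold_right Rplus 0 (map (fun c => f c ^ 2) l) <= INR (length l) * P ^ 2) by (apply IHl; intros; apply H; right; auto).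
  rewrite S_INR.
  assert (f a ^ 2 <= P ^ 2).
  { rewrite <- (Rabs_right (P^2)) by (apply Rle_ge, pow2_ge_0). rewrite <- RPow_abs.
    rewrite <- (pow2_abs (f a)). apply pow_incr. split. apply Rabs_pos.
    eapply Rle_trans; [apply H1|apply RRle_abs]. }
  lra. Qed.

Lemma flat_map_len {A B} (f : A -> list B) (l : list A) m :
  (forall x, length (f x) = m) -> length (flat_map f l) = (length l * m)%nat.
Proof. intros H. induction l; simpl; auto. rewrite length_app, H, IHl. lia. Qed.

Lemma coords_len d r L K :
  length (coords d r L K) = (K * (1 + (L - 1) * (r * S r) + r * S d))%nat.
Proof.
  unfold coords. rewrite !length_app, length_map, length_seq.
  rewrite (flat_map_len _ _ (K * (r * S r))).
  2:{ intros l. rewrite (flat_map_len _ _ (r * S r)). rewrite length_seq; lia.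
      intros k. rewrite (flat_map_len _ _ (S r)). rewrite length_seq; lia.
      intros i. rewrite length_map, length_seq. lia. }
  rewrite (flat_map_len _ _ (r * S d)).
  2:{ intros k. rewrite (flat_map_len _ _ (S d)). rewrite length_seq; lia.
      intros i. rewrite length_map, length_seq. lia. }
  rewrite !length_seq. lia.
Qed.

Lemma fnet_bound sigma M d r L K w x G :
  (forall z, Rabs (sigma z) <= M) -> 0 <= M ->
  (forall k, (1 <= k <= K)%nat -> Rabs (w L 1%nat 1%nat k) <= G) ->
  Rabs (fnet sigma d r L K w x) <= INR K * G * M.
Proof. intros Hs HM HG. unfold fnet. eapply Rle_trans. apply rsum1_abs.
  rewrite Rmult_assoc, <- rsum1_const. apply rsum1_le. intros k Hk.
  rewrite Rabs_mult. apply Rmult_le_compat; try apply Rabs_pos; auto. apply hid_bound; auto. Qed.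

Lemma R_bound sigma M d r L K n c2 alpha X Y w v G :
  (forall z, Rabs (sigma z) <= M) -> 0 <= M -> 0 <= c2 -> (1 <= n)%nat -> 0 <= G ->
  (forall k, (1 <= k <= K)%nat -> Rabs (w L 1%nat 1%nat k) <= G) ->
  / INR n * rsum1 (fun i => Rabs (fnet sigma d r L K w (X i) - Y i) * box_ind alpha (X i) d) n
  <= sqrt (Rmax (Fobj sigma d r L K n c2 alpha X Y v) 1)
     + INR K * M * (2 * G + maxnorm d r L K (wsub w v)).
Proof.
  intros Hs HM Hc2 Hn HG HGw.
  set (Phi := Rmax (Fobj sigma d r L K n c2 alpha X Y v) 1).
  set (lam := sqrt Phi). set (del := maxnorm d r L K (wsub w v)).
  assert (HPhi : 1 <= Phi) by apply Rmax_r.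
  assert (Hlam : 0 < lam) by (apply sqrt_lt_R0; lra).
  assert (Hlam2 : lam * lam = Phi) by (apply sqrt_sqrt; lra).
  assert (Hdel : 0 <= del) by apply fold_max_nonneg.
  assert (HnR : 0 < INR n) by (apply lt_0_INR; lia).
  assert (Hv : forall k, (1 <= k <= K)%nat -> Rabs (v L 1%nat 1%nat k) <= G + del).
  { intros k Hk. pose proof (maxnorm_ge d r L K (wsub w v) _ (outer_in d r L K k Hk)) as H.
    change (Rabs (at_c (wsub w v) (L, 1%nat, 1%nat, k)) <= del) in H.
    simpl in H. unfold wsub in H. specialize (HGw k Hk).
    replace (v L 1%nat 1%nat k) with (w L 1%nat 1%nat k - (w L 1%nat 1%nat k - v L 1%nat 1%nat k)) by ring.
    unfold Rminus at 1. eapply Rle_trans. apply Rabs_triang. rewrite Rabs_Ropp. lra. }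
  set (Q := INR K * M * (2 * G + del)).
  set (Fd := rsum1 (fun i => (fnet sigma d r L K v (X i) - Y i) ^ 2 * box_ind alpha (X i) d) n).
  assert (HFd : / INR n * Fd <= Phi).
  { eapply Rle_trans; [|apply Rmax_l]. unfold Fobj. fold Fd.
    assert (0 <= c2 * rsum1 (fun j => v L 1%nat 1%nat j ^ 2) K).
    { apply Rmult_le_pos; auto. apply Rle_trans with (rsum1 (fun _ => 0) K).
      rewrite rsum1_const; lra. apply rsum1_le; intros; apply pow2_ge_0. }
    lra. }
  apply Rle_trans with (/ INR n * rsum1 (fun i => lam / 2 + Q + / (2 * lam) * ((fnet sigma d r L K v (X i) - Y i) ^ 2 * box_ind alpha (X i) d)) n).
  - apply Rmult_le_compat_l. left; apply Rinv_0_lt_compat; lra.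
    apply rsum1_le. intros i _.
    pose proof (fnet_bound sigma M d r L K w (X i) G Hs HM HGw) as Ha0.
    pose proof (fnet_bound sigma M d r L K v (X i) (G + del) Hs HM Hv) as Hav.
    set (a0 := fnet sigma d r L K w (X i)) in *. set (av := fnet sigma d r L K v (X i)) in *.
    assert (HQ : Rabs a0 + Rabs av <= Q).
    { unfold Q. replace (INR K * M * (2 * G + del)) with (INR K * G * M + INR K * (G + del) * M) by ring. lra. }
    destruct (box_cases alpha (X i) d) as [E|[E _]]; rewrite E.
    + rewrite !Rmult_0_r. assert (0 <= Q) by (pose proof (Rabs_pos a0); pose proof (Rabs_pos av); lra). lra.
    + rewrite !Rmult_1_r.
      assert (Rabs (a0 - Y i) <= Rabs (av - Y i) + Q).
      { replace (a0 - Y i) with ((av - Y i) + (a0 - av)) by ring.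
        eapply Rle_trans. apply Rabs_triang. unfold Rminus at 2.
        pose proof (Rabs_triang a0 (- av)). rewrite Rabs_Ropp in H. lra. }
      assert (Rabs (av - Y i) <= lam / 2 + / (2 * lam) * (av - Y i) ^ 2).
      { set (z := Rabs (av - Y i)). replace ((av - Y i) ^ 2) with (z * z) by (unfold z; rewrite <- pow2_abs; ring).
        apply (Rmult_le_reg_l (2 * lam)). lra.
        replace (2 * lam * (lam / 2 + / (2 * lam) * (z * z))) with (lam * lam + z * z) by (field; lra).
        pose proof (pow2_ge_0 (lam - z)). nra. }
      lra.
  - rewrite <- rsum1_plus, rsum1_const, rsum1_scal.
    rewrite Rmult_plus_distr_l.
    replace (/ INR n * (INR n * (lam / 2 + Q))) with (lam / 2 + Q) by (field; lra).
    assert (/ INR n * (/ (2 * lam) * Fd) <= lam / 2).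
    { replace (/ INR n * (/ (2 * lam) * Fd)) with (/ (2 * lam) * (/ INR n * Fd)) by ring.
      apply Rle_trans with (/ (2 * lam) * Phi).
      apply Rmult_le_compat_l; auto. left; apply Rinv_0_lt_compat; lra.
      rewrite <- Hlam2. right; field; lra. }
    fold Fd. lra.
Qed.

Theorem lemma2 :
  forall (sigma : R -> R),
    (exists M, forall x, Rabs (sigma x) <= M) ->
    (forall x, ex_derive sigma x) ->
    (exists M', forall x, Rabs (Derive sigma x) <= M') ->
  forall (d r L : nat) (c2 : R),
    (2 * d <= r)%nat -> (1 <= L)%nat -> 0 < c2 ->
  exists c5 : R, 0 < c5 /\
  forall (n K : nat) (X : nat -> Pt) (Y : nat -> R)
         (alpha Ln tn gam Bn : R) (w v : Weights),
    (1 <= n)%nat ->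
    1 <= alpha -> 0 < Ln -> Ln <= tn -> 1 <= gam -> 1 <= Bn ->
    (forall k, (1 <= k <= K)%nat -> Rabs (w L 1%nat 1%nat k) <= gam) ->
    (forall l k i j, (1 <= l <= L - 1)%nat -> (1 <= k <= K)%nat ->
        (1 <= i <= r)%nat -> (j <= r)%nat -> Rabs (w l k i j) <= Bn) ->
    (maxnorm d r L K (wsub w v)) ^ 2
      <= 2 * tn / Ln * Rmax (Fobj sigma d r L K n c2 alpha X Y v) 1 ->
    gradnorm d r L K (Fobj sigma d r L K n c2 alpha X Y) w
      <= c5 * (INR K * sqrt (INR K)) * Bn ^ (2 * L) * gam ^ 2 * alpha ^ 2
            * sqrt (tn / Ln * Rmax (Fobj sigma d r L K n c2 alpha X Y v) 1).
Proof.
  intros sigma [M0 HM0] Hd [M1 HM1] d r L c2 Hr HL Hc2.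
  set (M := Rabs M0). set (M' := Rabs M1).
  assert (HM : 0 <= M) by apply Rabs_pos. assert (HM' : 0 <= M') by apply Rabs_pos.
  assert (Hs : forall z, Rabs (sigma z) <= M).
  { intros z. eapply Rle_trans. apply HM0. apply RRle_abs. }
  assert (Hl : forall a b, Rabs (sigma a - sigma b) <= M' * Rabs (a - b)).
  { apply sigma_lip; auto. intros x. eapply Rle_trans. apply HM1. apply RRle_abs. }
  set (c1 := Cm M M' d r (L - 1) + M). set (c3 := 1 + 4 * M).
  set (c4 := c1 * c1 + 2 * c1 * c3 + 3 * c2).
  set (N0 := (1 + (L - 1) * (r * S r) + r * S d)%nat).
  assert (HCm : 0 <= Cm M M' d r (L - 1)) by (apply Cm_nonneg; auto).
  assert (Hc1 : 0 <= c1) by (unfold c1; lra).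
  assert (Hc3 : 1 <= c3) by (unfold c3; lra).
  assert (Hc4 : 3 * c2 <= c4).
  { unfold c4. assert (0 <= c1 * c1) by (apply Rmult_le_pos; lra). assert (0 <= c1 * c3) by (apply Rmult_le_pos; lra). lra. }
  assert (HN0 : 0 < sqrt (INR N0)).
  { apply sqrt_lt_R0. apply lt_0_INR. unfold N0; apply Nat.lt_0_succ. }
  exists (sqrt (INR N0) * c4). split. { apply Rmult_lt_0_compat; lra. }
  intros n K X Y alpha Ln tn gam Bn w v Hn Ha HLn Ht Hg HB HGw HBw Hmax.
  set (F := Fobj sigma d r L K n c2 alpha X Y).
  set (Phi := Rmax (F v) 1).
  set (S := sqrt (tn / Ln * Phi)).
  set (del := maxnorm d r L K (wsub w v)).
  set (D := gam * Cm M M' d r (L - 1) * Bn ^ (L - 1) * alpha + M).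
  set (R := / INR n * rsum1 (fun i => Rabs (fnet sigma d r L K w (X i) - Y i)
                                       * box_ind alpha (X i) d) n).
  set (P := D * (D + 2 * R) + c2 * (2 * gam + 1)).
  assert (Hpart : forall c, Rabs (partial F w c) <= P).
  { intros c. apply partial_bound. intros h Hh.
    pose proof (F_lip sigma M M' d r L K n c2 alpha X Y w Bn gam c h Hs Hl HM HM' Ha HB
      ltac:(lra) ltac:(lra) Hn HBw HGw ltac:(rewrite Rabs_right; lra)) as H.
    cbv zeta in H. rewrite (Rabs_right h) in H by lra. apply H. }
  assert (Hgrad : gradnorm d r L K F w <= sqrt (INR (K * N0) * P ^ 2)).
  { unfold gradnorm. apply sqrt_le_1_alt. unfold N0. rewrite <- coords_len.
    apply fold_sum_bound. intros; apply Hpart. }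
  destruct K as [|K'].
  { simpl in Hgrad. rewrite Rmult_0_l, sqrt_0 in Hgrad. simpl INR. rewrite Rmult_0_l.
    rewrite !Rmult_0_r, !Rmult_0_l. exact Hgrad. }
  set (K := Datatypes.S K') in *.
  assert (HK : 1 <= INR K) by (apply (le_INR 1); unfold K; lia).
  assert (HtL : 1 <= tn / Ln).
  { apply (Rmult_le_reg_r Ln). lra. unfold Rdiv. rewrite Rmult_assoc, Rinv_l; lra. }
  assert (HPhi : 1 <= Phi) by apply Rmax_r.
  assert (HS2 : S * S = tn / Ln * Phi) by (apply sqrt_sqrt; nra).
  assert (HS0 : 0 <= S) by apply sqrt_pos.
  assert (HS : 1 <= S) by nra.
  assert (HlamS : sqrt Phi <= S) by (apply sqrt_le_1_alt; nra).
  assert (Hdel0 : 0 <= del) by apply fold_max_nonneg.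
  assert (Hdel : del <= 2 * S).
  { assert (del ^ 2 <= 2 * (S * S)). { rewrite HS2. unfold del. eapply Rle_trans. apply Hmax.
      right. unfold Phi, F. unfold Rdiv. ring. } nra. }
  assert (HR : R <= sqrt Phi + INR K * M * (2 * gam + del)).
  { apply R_bound; auto; lra. }
  assert (HR0 : 0 <= R).
  { unfold R. apply Rmult_le_pos. left; apply Rinv_0_lt_compat, lt_0_INR; lia.
    apply Rle_trans with (rsum1 (fun _ => 0) n). rewrite rsum1_const; lra.
    apply rsum1_le. intros i _. apply Rmult_le_pos. apply Rabs_pos. apply box_nonneg. }
  assert (HBL1 : 1 <= Bn ^ (L - 1)) by (apply pow_R1_Rle; lra).
  assert (HBL : Bn ^ L = Bn ^ (L - 1) * Bn).
  { replace L with (Datatypes.S (L - 1)) at 1 by lia. simpl. ring. }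
  set (u := gam * Bn ^ L * alpha).
  assert (Hu : 1 <= u).
  { unfold u. rewrite HBL. assert (1 <= Bn ^ (L - 1) * Bn) by nra. assert (1 <= gam * (Bn ^ (L - 1) * Bn)) by nra. nra. }
  assert (Hgu : gam <= u).
  { unfold u. rewrite HBL. assert (1 <= Bn ^ (L - 1) * Bn) by nra.
    assert (1 <= Bn ^ (L - 1) * Bn * alpha) by nra. nra. }
  assert (HD0 : 0 <= D).
  { unfold D. assert (0 <= gam * Cm M M' d r (L - 1)) by nra.
    assert (0 <= gam * Cm M M' d r (L - 1) * Bn ^ (L - 1)) by nra. nra. }
  assert (HD : D <= c1 * u).
  { unfold D, c1, u. rewrite HBL.
    assert (gam * Cm M M' d r (L - 1) * Bn ^ (L - 1) * alpha <= Cm M M' d r (L - 1) * (gam * (Bn ^ (L - 1) * Bn) * alpha)).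
    { replace (Cm M M' d r (L - 1) * (gam * (Bn ^ (L - 1) * Bn) * alpha)) with
         ((gam * Cm M M' d r (L - 1) * Bn ^ (L - 1) * alpha) * Bn) by ring.
      assert (0 <= gam * Cm M M' d r (L - 1) * Bn ^ (L - 1) * alpha).
      { assert (0 <= gam * Cm M M' d r (L - 1)) by nra.
        assert (0 <= gam * Cm M M' d r (L - 1) * Bn ^ (L - 1)) by nra. nra. }
      nra. }
    fold u. assert (M <= M * u) by nra. unfold u in *. rewrite HBL in *. nra. }
  set (KS := INR K * S).
  assert (HKS : 1 <= KS) by (unfold KS; nra).
  assert (HR2 : R <= c3 * KS * u).
  { unfold c3, KS.
    assert (INR K * M * (2 * gam + del) <= 2 * M * INR K * gam + 2 * M * INR K * S).
    { assert (0 <= INR K * M) by nra. nra. }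
    assert (S <= INR K * S) by nra.
    assert (0 <= INR K * S) by nra.
    assert (INR K * S <= INR K * S * u) by nra.
    assert (2 * M * INR K * gam <= 2 * M * (INR K * S * u)).
    { assert (0 <= 2 * M * INR K) by nra. assert (gam <= S * u) by nra. nra. }
    assert (2 * M * INR K * S <= 2 * M * (INR K * S * u)).
    { assert (0 <= 2 * M * (INR K * S)) by nra. nra. }
    nra. }
  set (Pb := c4 * KS * (u * u)).
  assert (HP0 : 0 <= P) by (unfold P; nra).
  assert (HP : P <= Pb).
  { unfold P, Pb, c4.
    assert (D * (D + 2 * R) <= c1 * u * (c1 * u + 2 * (c3 * KS * u))).
    { apply Rmult_le_compat; try lra. }
    assert (c1 * u * (c1 * u) <= c1 * c1 * KS * (u * u)).
    { assert (0 <= c1 * c1 * (u * u)) by nra. nra. }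
    assert (c2 * (2 * gam + 1) <= 3 * c2 * KS * (u * u)).
    { assert (2 * gam + 1 <= 3 * u) by lra. assert (u <= KS * (u * u)) by nra. nra. }
    nra. }
  eapply Rle_trans. apply Hgrad.
  eapply Rle_trans. apply sqrt_le_1_alt. apply Rmult_le_compat_l. apply pos_INR.
  apply pow_incr. split. apply HP0. apply HP.
  rewrite mult_INR, !sqrt_mult_alt. 2: apply pos_INR. 2: { apply Rmult_le_pos; apply pos_INR. }
  rewrite sqrt_pow2 by (unfold Pb; assert (0 <= u * u) by nra; apply Rmult_le_pos; [apply Rmult_le_pos|]; lra).
  replace (2 * L)%nat with (L + L)%nat by lia. rewrite pow_add.
  fold F Phi S. unfold Pb, KS, u.
  assert (HsK : INR K = sqrt (INR K) * sqrt (INR K)) by (rewrite sqrt_sqrt; auto; lra).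
  right. ring.
Qed.
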